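(* Let $0\le\alpha\le\beta$ and let $q=(q_n)$, $q_n\in(0,1)$, satisfy $st-\lim_n q_n=1$, $st-\lim_n q_n^n=a$ $(a<1)$ and $st-\lim_n 1/[n]_{q_n}=0$. Then for every non-decreasing bounded continuous function $f$ on $[0,\infty)$, every $x\ge 0$ and every $n\in\mathbb N$, $$\big|\mathfrak{D}_n^{(\alpha,\beta)}(f;q_n;x)-f(x)\big|\le 2\,\omega\big(f;\sqrt{\delta_n(x)}\big),$$ where, writing $q=q_n$, $$\delta_n(x)=\left(\frac{[n]_q(q[n]_q+1)}{q([n]_q+\beta)^2}+1-\frac{2[n]_q}{[n]_q+\beta}\right)x^2+\left(\frac{[n]_q+q^2[n]_q-2\alpha\beta-2q\beta}{([n]_q+\beta)^2}\right)x+\frac{q^2(1+q)+2q\alpha+\alpha^2}{([n]_q+\beta)^2}.$$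
   Context: $q$-calculus notation, for $0<q<1$: $[n]_q=\frac{1-q^n}{1-q}$; $[k]_q!=[k]_q[k-1]_q\cdots[1]_q$ with $[0]_q!=1$; $\left[\begin{array}{c}n\\k\end{array}\right]_q=\frac{[n]_q!}{[k]_q!\,[n-k]_q!}$; $(1+x)_q^m=(1+x)(1+qx)\cdots(1+q^{m-1}x)$ with $(1+x)_q^0=1$. The $q$-exponential is $E_q(z)=\sum_{k=0}^\infty q^{k(k-1)/2}\frac{z^k}{[k]_q!}=\prod_{j=0}^\infty(1+(1-q)q^jz)$. The $q$-Jackson integral is $\int_0^a g(t)\,d_qt=(1-q)a\sum_{j=0}^\infty g(aq^j)q^j$. For $n\in\mathbb N$, $0<q<1$, $x\in[0,\infty)$ define $p^q_{n,k}(x)=\left[\begin{array}{c}n+k-1\\k\end{array}\right]_q q^{k(k-1)/2}\frac{x^k}{(1+x)_q^{n+k}}$ and $s^q_{n,k}(t)=E_q(-[n]_qt)\frac{([n]_qt)^k}{[k]_q!}$. The $q$-Baskakov–Szász–Stancu operators with parameters $0\le\alpha\le\beta$ are $$\mathfrak{D}_n^{(\alpha,\beta)}(f;q;x)=[n]_q\sum_{k=0}^\infty p^q_{n,k}(x)\int_0^{q/(1-q^n)} q^{-k-1}s^q_{n,k}(t)\, f\!\left(\frac{[n]_q t q^{-k}+\alpha}{[n]_q+\beta}\right)d_qt .$$ With $q=q_n$, $[n]_q$ means $[n]_{q_n}$. Statistical convergence: for $K\subseteq\mathbb N$, its natural density is $\delta(K)=\lim_n \frac1n|\{j\le n: j\in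 K\}|$ (if it exists). A real sequence $(x_j)$ is statistically convergent to $L$, written $st-\lim_n x_n=L$, if for every $\epsilon>0$, $\delta(\{j:|x_j-L|\ge\epsilon\})=0$. Modulus of continuity: for bounded continuous $f$ on $[0,\infty)$ and $\delta>0$, $\omega(f;\delta)=\sup\{|f(t)-f(x)|: t,x\in[0,\infty),\ |t-x|\le\delta\}$. *)

(* Defs.v *)
From Stdlib Require Import Reals Lra Lia Classical ClassicalEpsilon ClassicalDescription.
Open Scope R_scope.

(* Sum of a real series: the limit of partial sums if it converges
   (chosen by classical choice; arbitrary otherwise). *)
Definition Series (u : nat -> R) : R :=
  epsilon (inhabits 0) (fun l => infinite_sum u l).

Definition qint (q : R) (n : nat) : R := (1 - q ^ n) / (1 - q).

Fixpoint qfact (q : R) (k : nat) : R :=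
  match k with
  | O => 1
  | S k' => qint q (S k') * qfact q k'
  end.

Definition qbinom (q : R) (n k : nat) : R :=
  qfact q n / (qfact q k * qfact q (n - k)).

Fixpoint qpoch (q x : R) (m : nat) : R :=
  match m with
  | O => 1
  | S m' => qpoch q x m' * (1 + q ^ m' * x)
  end.

Definition qtri (q : R) (k : nat) : R := q ^ (Nat.div (k * (k - 1)) 2).

Definition Eq (q z : R) : R :=
  Series (fun k => qtri q k * z ^ k / qfact q k).

Definition jackson (q a : R) (g : R -> R) : R :=
  (1 - q) * a * Series (fun j => g (a * q ^ j) * q ^ j).

Definition p_nk (q : R) (n k : nat) (x : R) : R :=
  qbinom q (n + k - 1) k * qtri q k * x ^ k / qpoch q x (n + k).

Definition s_nk (q : R) (n k : nat) (t : R) : R :=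
  Eq q (- (qint q n * t)) * (qint q n * t) ^ k / qfact q k.

Definition BSS (alpha beta : R) (f : R -> R) (q : R) (n : nat) (x : R) : R :=
  qint q n *
  Series (fun k =>
    p_nk q n k x *
    jackson q (q / (1 - q ^ n))
      (fun t => / q ^ (k + 1) * s_nk q n k t *
                f ((qint q n * t / q ^ k + alpha) / (qint q n + beta)))).

Definition indic (P : Prop) : R :=
  if excluded_middle_informative P then 1 else 0.

(* natural density of K ⊆ N (N = {1,2,...}) is 0 *)
Definition density_zero (K : nat -> Prop) : Prop :=
  Un_cv (fun m => sum_f_R0 (fun j => indic (K (S j))) m / INR (S m)) 0.

Definition st_lim (u : nat -> R) (L : R) : Prop :=
  forall eps : R, eps > 0 -> density_zero (fun j => Rabs (u j - L) >= eps).

Definition omega (f : R -> R) (d : R) : R :=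
  epsilon (inhabits 0)
    (is_lub (fun v => exists t x, 0 <= t /\ 0 <= x /\ Rabs (t - x) <= d /\
                                  v = Rabs (f t - f x))).

Definition delta_n (alpha beta q : R) (n : nat) (x : R) : R :=
  let N := qint q n in
  (N * (q * N + 1) / (q * (N + beta) ^ 2) + 1 - 2 * N / (N + beta)) * x ^ 2
  + ((N + q ^ 2 * N - 2 * alpha * beta - 2 * q * beta) / (N + beta) ^ 2) * x
  + (q ^ 2 * (1 + q) + 2 * q * alpha + alpha ^ 2) / (N + beta) ^ 2.

(* Main.v *)
Require Import Defs.
From Stdlib Require Import Reals Lra Lia Classical ClassicalEpsilon ZArith.
From Coquelicot Require Import Coquelicot.
Open Scope R_scope.


Lemma DS_eq (u : nat -> R) (l : R) : is_series u l -> Defs.Series u = l.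
Proof.
  intro H. apply is_series_Reals in H. unfold Defs.Series.
  apply (uniqueness_sum u).
  - apply epsilon_spec. exists l. exact H.
  - exact H.
Qed.

Lemma isr_scal (c : R) (a : nat -> R) (l : R) : is_series a l -> is_series (fun n => c * a n) (c * l).
Proof. intro H. exact (is_series_scal_l c a l H). Qed.

Lemma isr_plus (a b : nat -> R) (la lb : R) : is_series a la -> is_series b lb ->
  is_series (fun n => a n + b n) (la + lb).
Proof. intros H1 H2. exact (is_series_plus a b la lb H1 H2). Qed.

Lemma isr_minus (a b : nat -> R) (la lb : R) : is_series a la -> is_series b lb ->
  is_series (fun n => a n - b n) (la - lb).
Proof. intros H1 H2. exact (is_series_minus a b la lb H1 H2). Qed.

Lemma isr_ext (a b : nat -> R) (l l' : R) : (forall n, a n = b n) -> l = l' -> is_series a l -> is_series b l'.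
Proof. intros H e H1; rewrite <- e. exact (is_series_ext a b l H H1). Qed.

Lemma isr_le (b e : nat -> R) (E : R) : (forall k, Rabs (b k) <= e k) -> is_series e E ->
  ex_series b /\ Rabs (Series b) <= E.
Proof.
  intros Hb He.
  assert (Ee : ex_series e) by (exists E; exact He).
  assert (Eb : ex_series b) by (apply (@ex_series_le _ R_CompleteNormedModule b e); [intro k; exact (Hb k)| exact Ee]).
  split; [exact Eb|].
  assert (Ea : ex_series (fun n => Rabs (b n))).
  { apply (@ex_series_le _ R_CompleteNormedModule _ e); [intro k; change (Rabs (Rabs (b k)) <= e k); rewrite Rabs_Rabsolu; apply Hb | exact Ee]. }
  eapply Rle_trans. apply Series_Rabs. exact Ea.
  rewrite <- (is_series_unique e E He).
  apply Series_le; [intro k; split; [apply Rabs_pos| apply Hb] | exact Ee].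
Qed.

Lemma isr_zero : is_series (fun _ : nat => 0) 0.
Proof.
  assert (H := isr_scal 0 _ _ (is_series_geom (1/2) ltac:(rewrite Rabs_pos_eq; lra))).
  eapply isr_ext; [| | exact H]; intros; simpl; ring.
Qed.

Lemma isr_ge0 (a : nat -> R) (l : R) : (forall n, 0 <= a n) -> is_series a l -> a O <= l.
Proof.
  intros Hp H. 
  assert (H1 : is_series (fun k => a (S k)) (l - a O)).
  { apply is_series_incr_1. eapply (isr_ext a a); [reflexivity| |exact H]. unfold plus; simpl; ring. }
  assert (0 <= Series (fun k => a (S k))).
  { assert (Z: Series (fun _ : nat => 0) = 0) by (apply is_series_unique; apply isr_zero).
    rewrite <- Z. apply Series_le. intro; split; [lra| apply Hp]. eexists; exact H1. }
  rewrite (is_series_unique _ _ H1) in H0. lra.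
Qed.

Lemma ratio_ex (u : nat -> R) (K0 : nat) (r : R) : 0 <= r < 1 ->
  (forall k, (K0 <= k)%nat -> Rabs (u (S k)) <= r * Rabs (u k)) -> ex_series u.
Proof.
  intros Hr H.
  apply ex_series_Rabs.
  apply (ex_series_incr_n _ K0).
  apply (@ex_series_le _ R_CompleteNormedModule _ (fun k => Rabs (u K0) * r ^ k)).
  - intro k. change (Rabs (Rabs (u (K0 + k)%nat)) <= Rabs (u K0) * r ^ k). rewrite Rabs_Rabsolu.
    induction k.
    + rewrite Nat.add_0_r. simpl. lra.
    + replace (K0 + S k)%nat with (S (K0 + k)) by lia.
      eapply Rle_trans. apply H. lia. simpl.
      replace (Rabs (u K0) * (r * r ^ k)) with (r * (Rabs (u K0) * r ^ k)) by ring.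
      apply Rmult_le_compat_l; lra.
  - destruct (ex_series_geom r ltac:(rewrite Rabs_pos_eq; lra)) as [l Hl]. exists (Rabs (u K0) * l). apply isr_scal. exact Hl.
Qed.

Lemma isr_incr1 (a : nat -> R) (l : R) : is_series a l -> is_series (fun k => a (S k)) (l - a O).
Proof. intro H. apply (@is_series_incr_1 _ R_NormedModule a). eapply (isr_ext a a); [reflexivity| |exact H]. unfold plus; simpl; ring. Qed.

Lemma isr_decr1 (a : nat -> R) (l : R) : is_series (fun k => a (S k)) l -> is_series a (l + a O).
Proof. intro H. apply (@is_series_decr_1 _ R_NormedModule a). eapply (isr_ext _ _ l); [reflexivity| |exact H]. unfold plus, opp; simpl; ring. Qed.


Lemma pow_le1 (q : R) k : 0 <= q <= 1 -> q ^ k <= 1.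
Proof. intro H. induction k; simpl; [lra|]. 
  assert (0 <= q ^ k) by (apply pow_le; lra). nra. Qed.

Lemma pow_decr (q : R) m n : 0 <= q <= 1 -> (m <= n)%nat -> q ^ n <= q ^ m.
Proof. intros H Hmn. replace n with (m + (n - m))%nat by lia. rewrite pow_add.
  assert (0 <= q ^ m) by (apply pow_le; lra). assert (q ^ (n - m) <= 1) by (apply pow_le1; lra).
  assert (0 <= q ^ (n-m)) by (apply pow_le; lra). nra. Qed.

Lemma pow_pos' (q : R) k : 0 < q -> 0 < q ^ k.
Proof. intro; apply pow_lt; lra. Qed.

Lemma qint_mul (q : R) k : q <> 1 -> (1 - q) * qint q k = 1 - q ^ k.
Proof. intro. unfold qint. field. lra. Qed.

Lemma qint_S (q : R) n : q <> 1 -> qint q (S n) = 1 + q * qint q n.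
Proof. intro. unfold qint. simpl. field. lra. Qed.

Lemma qint_ge1 (q : R) n : 0 < q < 1 -> 1 <= qint q (S n).
Proof. intro Hq. induction n.
  - unfold qint. simpl. replace ((1 - q * 1) / (1 - q)) with 1 by (field; lra). lra.
  - rewrite qint_S by lra. 
    assert (0 <= qint q n).
    { unfold qint. apply Rmult_le_pos. assert (q ^ n <= 1) by (apply pow_le1; lra). lra.
      left; apply Rinv_0_lt_compat; lra. }
    assert (qint q (S n) = 1 + q * qint q n) by (apply qint_S; lra). nra.
Qed.

Lemma qint_nonneg (q : R) n : 0 < q < 1 -> 0 <= qint q n.
Proof. intro Hq. unfold qint. apply Rmult_le_pos. assert (q ^ n <= 1) by (apply pow_le1; lra). lra.
  left; apply Rinv_0_lt_compat; lra. Qed.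

Lemma qfact_ge1 (q : R) k : 0 < q < 1 -> 1 <= qfact q k.
Proof. intro Hq. induction k; simpl; [lra|]. 
  assert (1 <= qint q (S k)) by (apply qint_ge1; lra). nra. Qed.

Lemma qfact_pos (q : R) k : 0 < q < 1 -> 0 < qfact q k.
Proof. intro Hq. assert (1 <= qfact q k) by (apply qfact_ge1; lra). lra. Qed.

Lemma tri_S k : (Nat.div (S k * (S k - 1)) 2 = Nat.div (k * (k - 1)) 2 + k)%nat.
Proof.
  replace (S k * (S k - 1))%nat with (k * (k - 1) + k * 2)%nat by (destruct k; simpl; lia).
  apply Nat.div_add. lia.
Qed.

Lemma qtri_S (q : R) k : qtri q (S k) = qtri q k * q ^ k.
Proof. unfold qtri. rewrite tri_S. apply pow_add. Qed.

Lemma qtri_pos (q : R) k : 0 < q -> 0 < qtri q k.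
Proof. intro. unfold qtri. apply pow_lt; lra. Qed.

Lemma qtri_le1 (q : R) k : 0 < q < 1 -> qtri q k <= 1.
Proof. intro. unfold qtri. apply pow_le1; lra. Qed.

Definition eterm (q z : R) (k : nat) : R := qtri q k * z ^ k / qfact q k.

Lemma eterm_S (q z : R) k : 0 < q < 1 ->
  eterm q z (S k) = q ^ k * z / qint q (S k) * eterm q z k.
Proof. intro Hq. unfold eterm. rewrite qtri_S. simpl qfact.
  assert (0 < qfact q k) by (apply qfact_pos; lra).
  assert (1 <= qint q (S k)) by (apply qint_ge1; lra).
  simpl. field. lra. Qed.

Lemma eterm_ex (q z : R) : 0 < q < 1 -> ex_series (eterm q z).
Proof.
  intro Hq.
  destruct (pow_lt_1_zero q ltac:(rewrite Rabs_pos_eq; lra) (/ (2 * (Rabs z + 1)))) as [K HK].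
  { apply Rinv_0_lt_compat. assert (0 <= Rabs z) by apply Rabs_pos. lra. }
  apply (ratio_ex _ K (1/2)); [lra|].
  intros k Hk. rewrite eterm_S by lra.
  assert (1 <= qint q (S k)) by (apply qint_ge1; lra).
  specialize (HK k Hk). rewrite Rabs_pos_eq in HK by (apply pow_le; lra).
  assert (0 <= q ^ k) by (apply pow_le; lra).
  assert (0 <= Rabs z) by apply Rabs_pos.
  assert (Hb : q ^ k * Rabs z <= 1/2).
  { assert (q ^ k * (2 * (Rabs z + 1)) < 1).
    { apply (Rmult_lt_compat_r (2 * (Rabs z + 1))) in HK; [|lra]. rewrite Rinv_l in HK; lra. }
    nra. }
  unfold Rdiv. rewrite !Rabs_mult. rewrite (Rabs_pos_eq (q ^ k)) by lra.
  rewrite Rabs_Rinv by lra. rewrite Rabs_pos_eq with (x := qint q (S k)) by lra.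
  assert (0 <= Rabs (eterm q z k)) by apply Rabs_pos.
  assert (/ qint q (S k) <= 1). { rewrite <- Rinv_1. apply Rinv_le_contravar; lra. }
  assert (0 < / qint q (S k)) by (apply Rinv_0_lt_compat; lra).
  assert (q ^ k * Rabs z * / qint q (S k) <= 1/2) by nra.
  nra.
Qed.

Lemma Eq_series (q z : R) : 0 < q < 1 -> is_series (eterm q z) (Eq q z).
Proof.
  intro Hq. destruct (eterm_ex q z Hq) as [l Hl].
  unfold Eq. rewrite (DS_eq _ l). exact Hl. exact Hl.
Qed.

Lemma Eq_fun (q z : R) : 0 < q < 1 -> Eq q z = (1 + (1 - q) * z) * Eq q (q * z).
Proof.
  intro Hq.
  pose proof (Eq_series q z Hq) as H1. pose proof (Eq_series q (q * z) Hq) as H2.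
  pose proof (isr_minus _ _ _ _ H1 H2) as H3.
  (* d k = eterm z k - eterm (qz) k; d 0 = 0; d (S k) = (1-q) z eterm (qz) k *)
  assert (H4 : is_series (fun k => eterm q z (S k) - eterm q (q*z) (S k)) (Eq q z - Eq q (q * z))).
  { eapply isr_ext; [reflexivity| |exact (isr_incr1 _ _ H3)].
    unfold eterm. simpl. field. }
  assert (H5 : is_series (fun k => eterm q z (S k) - eterm q (q*z) (S k)) ((1 - q) * z * Eq q (q * z))).
  { eapply isr_ext; [| reflexivity | exact (isr_scal ((1 - q) * z) _ _ H2)].
    intro k. unfold eterm. rewrite qtri_S. simpl qfact. rewrite Rpow_mult_distr.
    assert (0 < qfact q k) by (apply qfact_pos; lra).
    assert (1 <= qint q (S k)) by (apply qint_ge1; lra).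
    assert (E : (1 - q) * qint q (S k) = 1 - q ^ S k) by (apply qint_mul; lra).
    assert (E2 : qint q (S k) = (1 - q * q ^ k) / (1 - q)) by (unfold qint; reflexivity).
    rewrite E2. simpl pow. rewrite !Rpow_mult_distr. field. split; [lra|]. assert (q * q^k < 1). { assert (q ^ k <= 1) by (apply pow_le1; lra). nra. } lra. }
  apply is_series_unique in H4. apply is_series_unique in H5. lra.
Qed.


Lemma eterm_abs (q z : R) k : 0 < q < 1 -> Rabs (eterm q z k) <= Rabs z ^ k.
Proof.
  intro Hq. unfold eterm. unfold Rdiv. rewrite !Rabs_mult. rewrite <- RPow_abs.
  rewrite (Rabs_pos_eq (qtri q k)) by (left; apply qtri_pos; lra).
  assert (0 < qfact q k) by (apply qfact_pos; lra).
  assert (1 <= qfact q k) by (apply qfact_ge1; lra).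
  rewrite Rabs_Rinv by lra. rewrite (Rabs_pos_eq (qfact q k)) by lra.
  assert (qtri q k <= 1) by (apply qtri_le1; lra).
  assert (0 < qtri q k) by (apply qtri_pos; lra).
  assert (/ qfact q k <= 1). { rewrite <- Rinv_1. apply Rinv_le_contravar; lra. }
  assert (0 < / qfact q k) by (apply Rinv_0_lt_compat; lra).
  assert (0 <= Rabs z ^ k) by (apply pow_le, Rabs_pos).
  assert (qtri q k * / qfact q k <= 1) by nra. nra.
Qed.

Lemma Eq_near0 (q z : R) : 0 < q < 1 -> Rabs z <= 1/2 -> Rabs (Eq q z - 1) <= 2 * Rabs z.
Proof.
  intros Hq Hz.
  pose proof (isr_incr1 _ _ (Eq_series q z Hq)) as H.
  assert (E0 : eterm q z 0 = 1) by (unfold eterm, qtri; simpl; field).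
  rewrite E0 in H.
  assert (0 <= Rabs z) by apply Rabs_pos.
  assert (Hg : is_series (fun k => Rabs z * Rabs z ^ k) (Rabs z * / (1 - Rabs z))).
  { apply isr_scal. apply is_series_geom. rewrite Rabs_pos_eq; lra. }
  destruct (isr_le (fun k => eterm q z (S k)) _ _ (fun k => eterm_abs q z (S k) Hq) Hg) as [_ Hb].
  rewrite (is_series_unique _ _ H) in Hb.
  eapply Rle_trans; [exact Hb|].
  assert (/ (1 - Rabs z) <= 2). { replace 2 with (/ (1/2)) by field. apply Rinv_le_contravar; lra. }
  nra.
Qed.

Definition Rq (q : R) (j : nat) : R := Eq q (- (q ^ j / (1 - q))).

Lemma Rq_fun (q : R) j : 0 < q < 1 -> Rq q j = (1 - q ^ j) * Rq q (S j).
Proof.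
  intro Hq. unfold Rq. rewrite Eq_fun by lra. f_equal.
  - field. lra.
  - f_equal. simpl. field. lra.
Qed.

Lemma Rq0 (q : R) : 0 < q < 1 -> Rq q 0 = 0.
Proof. intro Hq. rewrite Rq_fun by lra. simpl. ring. Qed.

Lemma geom_lim (q c : R) : 0 < q < 1 -> is_lim_seq (fun j => c * q ^ j) 0.
Proof.
  intro Hq. replace (Finite 0) with (Rbar_mult c 0) by (simpl; f_equal; ring).
  apply is_lim_seq_scal_l. apply is_lim_seq_geom. rewrite Rabs_pos_eq; lra.
Qed.

Lemma Rq_lim (q : R) : 0 < q < 1 -> is_lim_seq (Rq q) 1.
Proof.
  intro Hq.
  destruct (pow_lt_1_zero q ltac:(rewrite Rabs_pos_eq; lra) ((1 - q) / 2)) as [K HK].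
  { lra. }
  apply (is_lim_seq_incr_n _ K).
  apply (is_lim_seq_le_le (fun n => 1 - 2 / (1 - q) * q ^ (n + K)) _ (fun n => 1 + 2 / (1 - q) * q ^ (n + K))).
  - intro n. 
    assert (Hn := HK (n + K)%nat ltac:(lia)). rewrite Rabs_pos_eq in Hn by (apply pow_le; lra).
    assert (0 <= q ^ (n + K)) by (apply pow_le; lra).
    assert (Hz : Rabs (- (q ^ (n + K) / (1 - q))) <= 1/2).
    { rewrite Rabs_Ropp, Rabs_pos_eq. apply (Rmult_le_reg_r (1 - q)); [lra|].
      unfold Rdiv. rewrite Rmult_assoc, Rinv_l by lra. lra.
      apply Rmult_le_pos; [lra| left; apply Rinv_0_lt_compat; lra]. }
    pose proof (Eq_near0 q _ Hq Hz) as HE. unfold Rq.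
    rewrite Rabs_Ropp, (Rabs_pos_eq (q ^ (n + K) / (1 - q))) in HE by (apply Rmult_le_pos; [lra| left; apply Rinv_0_lt_compat; lra]).
    apply Rabs_le_between in HE. 
    replace (2 * (q ^ (n + K) / (1 - q))) with (2 / (1 - q) * q ^ (n + K)) in HE by (field; lra).
    lra.
  - replace (Finite 1) with (Finite (1 - 0)) by (f_equal; ring).
    apply is_lim_seq_minus'. apply is_lim_seq_const.
    apply (is_lim_seq_incr_n (fun n => 2 / (1 - q) * q ^ n)). apply geom_lim; lra.
  - replace (Finite 1) with (Finite (1 + 0)) by (f_equal; ring).
    apply is_lim_seq_plus'. apply is_lim_seq_const.
    apply (is_lim_seq_incr_n (fun n => 2 / (1 - q) * q ^ n)). apply geom_lim; lra.
Qed.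

Lemma Rq_pos (q : R) j : 0 < q < 1 -> (1 <= j)%nat -> 0 < Rq q j.
Proof.
  intros Hq Hj.
  pose proof (Rq_lim q Hq) as H. apply is_lim_seq_Reals in H.
  destruct (H (1/2) ltac:(lra)) as [K HK].
  assert (Hd : forall d j, (1 <= j)%nat -> 0 < Rq q (j + d) -> 0 < Rq q j).
  { induction d; intros j0 Hj0 Hp.
    - rewrite Nat.add_0_r in Hp. exact Hp.
    - replace (j0 + S d)%nat with (S j0 + d)%nat in Hp by lia.
      apply IHd in Hp; [|lia]. rewrite Rq_fun by lra.
      assert (q ^ j0 < 1). { destruct j0; [lia|]. apply pow_lt_1_compat; [lra|lia]. }
      apply Rmult_lt_0_compat; lra. }
  apply (Hd K j Hj). specialize (HK (j + K)%nat ltac:(unfold ge; lia)).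
  unfold Rdist in HK. apply Rabs_def2 in HK. lra.
Qed.

Lemma Rq_nonneg (q : R) j : 0 < q < 1 -> 0 <= Rq q j.
Proof. intro Hq. destruct j. rewrite Rq0 by lra; lra. left; apply Rq_pos; [lra|lia]. Qed.

Lemma Rq_le1 (q : R) j : 0 < q < 1 -> Rq q j <= 1.
Proof.
  intro Hq. apply (growing_ineq (Rq q)).
  - intro n. rewrite (Rq_fun q n) by lra.
    assert (0 <= Rq q (S n)) by (apply Rq_nonneg; lra).
    assert (0 <= q ^ n) by (apply pow_le; lra). nra.
  - apply is_lim_seq_Reals. apply Rq_lim; lra.
Qed.

Lemma telescope (d : nat -> R) (L : R) : is_lim_seq d L -> is_series (fun j => d (S j) - d j) (L - d O).
Proof.
  intro H.
  assert (Hs : forall N, sum_n (fun j => d (S j) - d j) N = d (S N) - d O).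
  { induction N. rewrite sum_O. reflexivity. rewrite sum_Sn, IHN. unfold plus; simpl. ring. }
  assert (H2 : is_lim_seq (sum_n (fun j => d (S j) - d j)) (L - d O)).
  { apply (is_lim_seq_ext (fun N => d (S N) - d O)). intro N; rewrite Hs; reflexivity.
    apply is_lim_seq_minus'. apply (is_lim_seq_incr_1 d). exact H. apply is_lim_seq_const. }
  exact H2.
Qed.

Fixpoint pq (q : R) (r : nat) : R :=
  match r with O => 1 | S r' => pq q r' * (1 - q ^ (S r')) end.

Lemma pq_qfact (q : R) k : 0 < q < 1 -> pq q k = (1 - q) ^ k * qfact q k.
Proof.
  intro Hq. induction k; simpl; [ring|]. rewrite IHk.
  assert (E : (1 - q) * qint q (S k) = 1 - q ^ S k) by (apply qint_mul; lra). simpl in E. 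
  rewrite <- E. ring.
Qed.

Lemma Gser (q : R) r : 0 < q < 1 -> is_series (fun j => (q ^ j) ^ (S r) * Rq q (S j)) (pq q r).
Proof.
  intro Hq. induction r.
  - eapply isr_ext; [| | exact (telescope (Rq q) 1 (Rq_lim q Hq))].
    + intro j. cbv beta. rewrite (Rq_fun q j) by lra. simpl. ring.
    + rewrite Rq0 by lra. simpl. ring.
  - set (d := fun j => (q ^ j) ^ (S r) * Rq q j).
    assert (Hd : is_lim_seq d 0).
    { unfold d. replace (Finite 0) with (Finite (0 * 1)) by (f_equal; ring).
      apply is_lim_seq_mult'; [| apply Rq_lim; lra].
      apply (is_lim_seq_ext (fun j => 1 * (q ^ (S r)) ^ j)).
      intro j. rewrite <- !pow_mult. rewrite Nat.mul_comm. ring.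
      apply geom_lim. split. apply pow_lt; lra. apply pow_lt_1_compat; [lra|lia]. }
    pose proof (isr_plus _ _ _ _ (telescope d 0 Hd) (isr_scal (1 - q ^ (S r)) _ _ IHr)) as H.
    eapply isr_ext; [| | exact H].
    + intro j. unfold d. cbv beta. rewrite (Rq_fun q j) by lra. simpl. rewrite Rpow_mult_distr. ring.
    + unfold d. rewrite Rq0 by lra. simpl. ring.
Qed.


Lemma qpoch_ge1 (q x : R) m : 0 < q -> 0 <= x -> 1 <= qpoch q x m.
Proof. intros Hq Hx. induction m; simpl; [lra|].
  assert (0 <= q ^ m * x) by (apply Rmult_le_pos; [apply pow_le; lra| lra]). nra. Qed.

Lemma a_form (q x : R) m k :
  p_nk q (S m) k x = qfact q (m + k) / (qfact q k * qfact q m) * qtri q k * x ^ k / qpoch q x (S (m + k)).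
Proof.
  unfold p_nk, qbinom.
  replace (S m + k - 1)%nat with (m + k)%nat by lia.
  replace (m + k - k)%nat with m by lia.
  replace (S m + k)%nat with (S (m + k)) by lia. reflexivity.
Qed.

Lemma qint_split (q : R) m k : q <> 1 -> qint q (S (S (m + k))) = qint q (S m) + q ^ (S m) * qint q (S k).
Proof. intro. unfold qint. replace (S (S (m + k))) with (S m + S k)%nat by lia. rewrite pow_add. field. lra. Qed.

Ltac nz Hq Hx := 
  repeat match goal with
  | |- _ /\ _ => split
  | |- qint ?q (S ?k) <> 0 => let H := fresh in assert (H := qint_ge1 q k Hq); lra
  | |- qfact ?q ?k <> 0 => let H := fresh in assert (H := qfact_pos q k Hq); lra
  | |- qpoch ?q ?x ?k <> 0 => let H := fresh in assert (H := qpoch_ge1 q x k ltac:(lra) Hx); lra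
  | |- ?q ^ ?k <> 0 => apply pow_nonzero; lra
  | |- 1 + ?t * ?x <> 0 => let H := fresh in
        assert (H : 0 <= t * x) by (repeat apply Rmult_le_pos; try lra; apply pow_le; lra); lra
  | |- ?a <> 0 => lra
  end.

Lemma a_shift (q x : R) m k : 0 < q < 1 -> 0 <= x ->
  qint q (S k) * p_nk q (S m) (S k) x = qint q (S m) * q ^ k * x * p_nk q (S (S m)) k x.
Proof.
  intros Hq Hx. rewrite !a_form.
  replace (m + S k)%nat with (S (m + k)) by lia. replace (S m + k)%nat with (S (m + k)) by lia.
  rewrite qtri_S. simpl qfact. simpl pow. field. nz Hq Hx.
Qed.

Lemma a_pascal (q x : R) m k : 0 < q < 1 -> 0 <= x ->
  p_nk q (S (S m)) (S k) x * (1 + q ^ (S m + S k) * x) = p_nk q (S m) (S k) x + q ^ (S m + k) * x * p_nk q (S (S m)) k x.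
Proof.
  intros Hq Hx. rewrite !a_form.
  replace (m + S k)%nat with (S (m + k)) by lia. replace (S m + k)%nat with (S (m + k)) by lia.
  replace (S m + S k)%nat with (S (S (m + k))) by lia.
  rewrite qtri_S. 
  change (qfact q (S (S (m + k)))) with (qint q (S (S (m + k))) * qfact q (S (m + k))).
  rewrite qint_split by lra.
  change (qpoch q x (S (S (S (m + k))))) with (qpoch q x (S (S (m + k))) * (1 + q ^ (S (S (m + k))) * x)).
  simpl qfact.
  assert (E1 : q ^ (S (S (m + k))) = q * q ^ m * (q * q ^ k)).
  { replace (S (S (m + k))) with (S m + S k)%nat by lia. rewrite pow_add. reflexivity. }
  rewrite E1. simpl pow. rewrite (pow_add q m k). field. nz Hq Hx.
Qed.

Lemma a_zero (q x : R) m : 0 < q < 1 -> 0 <= x ->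
  p_nk q (S (S m)) 0 x * (1 + q ^ (S m) * x) = p_nk q (S m) 0 x.
Proof.
  intros Hq Hx. rewrite !a_form. rewrite !Nat.add_0_r.
  change (qpoch q x (S (S m))) with (qpoch q x (S m) * (1 + q ^ (S m) * x)).
  change (qfact q (S m)) with (qint q (S m) * qfact q m). unfold qtri. simpl. field. nz Hq Hx.
Qed.

Lemma a_nonneg (q x : R) m k : 0 < q < 1 -> 0 <= x -> 0 <= p_nk q (S m) k x.
Proof.
  intros Hq Hx. rewrite a_form.
  assert (0 < qfact q (m + k)) by (apply qfact_pos; lra).
  assert (0 < qfact q k) by (apply qfact_pos; lra).
  assert (0 < qfact q m) by (apply qfact_pos; lra).
  assert (0 < qtri q k) by (apply qtri_pos; lra).
  assert (0 <= x ^ k) by (apply pow_le; lra).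
  assert (1 <= qpoch q x (S (m + k))) by (apply qpoch_ge1; lra).
  unfold Rdiv. repeat apply Rmult_le_pos; try lra; left; apply Rinv_0_lt_compat; nra.
Qed.

Lemma a1_partial (q x : R) K : 0 < q < 1 -> 0 <= x ->
  sum_n (fun k => p_nk q 1 k x) K = 1 - qtri q (S K) * x ^ (S K) / qpoch q x (S K).
Proof.
  intros Hq Hx. induction K.
  - rewrite sum_O. rewrite a_form. unfold qtri. simpl. field. lra.
  - rewrite sum_Sn, IHK. unfold plus; simpl. rewrite a_form. simpl (0 + S K)%nat.
    rewrite (qtri_S q (S K)).
    change (qpoch q x (S (S K))) with (qpoch q x (S K) * (1 + q ^ (S K) * x)).
    replace (qfact q (S K) / (qfact q (S K) * qfact q 0)) with 1 by (simpl qfact at 3; field; nz Hq Hx).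
    change (qpoch q x (S K)) with (qpoch q x K * (1 + q ^ K * x)). simpl pow. field. nz Hq Hx.
Qed.

Lemma tri_lim (q x : R) : 0 < q < 1 -> 0 <= x -> is_lim_seq (fun K => qtri q K * x ^ K) 0.
Proof.
  intros Hq Hx. apply ex_series_lim_0.
  destruct (pow_lt_1_zero q ltac:(rewrite Rabs_pos_eq; lra) (/ (2 * (x + 1)))) as [K HK].
  { apply Rinv_0_lt_compat. lra. }
  apply (ratio_ex _ K (1/2)); [lra|].
  intros k Hk. rewrite qtri_S. simpl pow.
  specialize (HK k Hk). rewrite Rabs_pos_eq in HK by (apply pow_le; lra).
  assert (0 <= q ^ k) by (apply pow_le; lra).
  assert (Hb : q ^ k * x <= 1/2).
  { assert (q ^ k * (2 * (x + 1)) < 1).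
    { apply (Rmult_lt_compat_r (2 * (x + 1))) in HK; [|lra]. rewrite Rinv_l in HK; lra. }
    nra. }
  replace (qtri q k * q ^ k * (x * x ^ k)) with ((q ^ k * x) * (qtri q k * x ^ k)) by ring.
  rewrite Rabs_mult, (Rabs_pos_eq (q ^ k * x)) by (apply Rmult_le_pos; lra).
  apply Rmult_le_compat_r; [apply Rabs_pos| lra].
Qed.

Lemma a_sum (q x : R) m : 0 < q < 1 -> 0 <= x -> is_series (fun k => p_nk q (S m) k x) 1.
Proof.
  intros Hq Hx. induction m.
  - assert (H : is_lim_seq (sum_n (fun k => p_nk q 1 k x)) 1).
    { apply (is_lim_seq_ext (fun K => 1 - qtri q (S K) * x ^ (S K) / qpoch q x (S K))).
      intro K; rewrite a1_partial; auto.
      replace (Finite 1) with (Finite (1 - 0)) by (f_equal; ring).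
      apply is_lim_seq_minus'; [apply is_lim_seq_const|].
      apply (is_lim_seq_le_le (fun _ => 0) _ (fun K => qtri q (S K) * x ^ (S K))).
      - intro K. assert (1 <= qpoch q x (S K)) by (apply qpoch_ge1; lra).
        assert (0 <= qtri q (S K) * x ^ (S K)) by (apply Rmult_le_pos; [left; apply qtri_pos; lra| apply pow_le; lra]).
        split. apply Rmult_le_pos; [lra| left; apply Rinv_0_lt_compat; lra].
        unfold Rdiv. rewrite <- (Rmult_1_r (qtri q (S K) * x ^ (S K))) at 2.
        apply Rmult_le_compat_l; [lra|]. rewrite <- Rinv_1. apply Rinv_le_contravar; lra.
      - apply is_lim_seq_const.
      - apply (is_lim_seq_incr_1 (fun K => qtri q K * x ^ K)). apply tri_lim; lra. }
    exact H.
  - set (a1 := fun k => p_nk q (S m) k x). set (a2 := fun k => p_nk q (S (S m)) k x).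
    assert (Hp : forall K, sum_n a2 K + q ^ (S m + K) * x * a2 K = sum_n a1 K).
    { induction K.
      - rewrite !sum_O. unfold a1, a2. rewrite <- (a_zero q x m) by lra. replace (S m + 0)%nat with (S m) by lia. ring.
      - rewrite !sum_Sn. unfold plus; simpl. rewrite <- IHK. unfold a1, a2.
        pose proof (a_pascal q x m K Hq Hx) as P. simpl in P. simpl. rewrite Rplus_assoc. replace (p_nk q (S (S m)) (S K) x + q * q ^ (m + S K) * x * p_nk q (S (S m)) (S K) x) with (p_nk q (S (S m)) (S K) x * (1 + q * q ^ (m + S K) * x)) by ring. rewrite P. ring. }
    assert (H1 : is_lim_seq (sum_n a1) 1) by exact IHm.
    assert (Hnn : forall k, 0 <= a2 k) by (intro; apply a_nonneg; lra).
    assert (Hs2 : forall K, 0 <= sum_n a2 K).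
    { induction K. rewrite sum_O; apply Hnn. rewrite sum_Sn; unfold plus; simpl. specialize (Hnn (S K)). lra. }
    assert (Hs : forall K, a2 K <= sum_n a1 K).
    { intro K. rewrite <- Hp. 
      assert (a2 K <= sum_n a2 K).
      { destruct K. rewrite sum_O; lra. rewrite sum_Sn. unfold plus; simpl. specialize (Hs2 K). lra. }
      assert (0 <= q ^ (S m + K) * x * a2 K).
      { apply Rmult_le_pos; [|apply Hnn]. apply Rmult_le_pos; [apply pow_le; lra| lra]. }
      lra. }
    assert (Ht : is_lim_seq (fun K => q ^ (S m + K) * x * a2 K) 0).
    { apply (is_lim_seq_le_le (fun _ => 0) _ (fun K => (q ^ (S m) * x * q ^ K) * sum_n a1 K)).
      - intro K. rewrite pow_add. split.
        + apply Rmult_le_pos; [|apply Hnn]. apply Rmult_le_pos; [|lra]. apply Rmult_le_pos; apply pow_le; lra.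
        + replace (q ^ S m * q ^ K * x * a2 K) with ((q ^ S m * x * q ^ K) * a2 K) by ring.
          apply Rmult_le_compat_l; [|apply Hs]. apply Rmult_le_pos; [|apply pow_le; lra]. apply Rmult_le_pos; [apply pow_le; lra|lra].
      - apply is_lim_seq_const.
      - replace (Finite 0) with (Finite (0 * 1)) by (f_equal; ring). apply is_lim_seq_mult'; [|exact H1].
        apply geom_lim; lra. }
    assert (H2 : is_lim_seq (sum_n a2) 1).
    { apply (is_lim_seq_ext (fun K => sum_n a1 K - q ^ (S m + K) * x * a2 K)).
      intro K. rewrite <- Hp. ring.
      replace (Finite 1) with (Finite (1 - 0)) by (f_equal; ring).
      apply is_lim_seq_minus'; assumption. }
    exact H2.
Qed.


Lemma y_id (q x : R) m k : 0 < q < 1 -> 0 <= x ->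
  / q ^ (S k) * p_nk q (S m) (S k) x = p_nk q (S m) (S k) x + (1 - q) * qint q (S m) * x / q * p_nk q (S (S m)) k x.
Proof.
  intros Hq Hx. pose proof (a_shift q x m k Hq Hx) as H.
  assert (E : (1 - q) * qint q (S k) = 1 - q ^ S k) by (apply qint_mul; lra).
  assert (Hk : 0 < q ^ k) by (apply pow_lt; lra).
  assert (E2 : p_nk q (S (S m)) k x * (qint q (S m) * x) = qint q (S k) * p_nk q (S m) (S k) x / q ^ k).
  { rewrite H. field. lra. }
  replace ((1 - q) * qint q (S m) * x / q * p_nk q (S (S m)) k x) with ((1 - q) / q * (p_nk q (S (S m)) k x * (qint q (S m) * x))) by (field; lra).
  rewrite E2. simpl pow. simpl pow in E. 
  replace ((1 - q) / q * (qint q (S k) * p_nk q (S m) (S k) x / q ^ k)) with (((1 - q) * qint q (S k)) * p_nk q (S m) (S k) x / (q * q ^ k)) by (field; lra).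
  rewrite E. field. lra.
Qed.

Lemma mom1 (q x : R) m : 0 < q < 1 -> 0 <= x ->
  is_series (fun k => / q ^ k * p_nk q (S m) k x) (1 + (1 - q) * qint q (S m) * x / q).
Proof.
  intros Hq Hx.
  pose proof (isr_incr1 _ _ (a_sum q x m Hq Hx)) as H1.
  pose proof (isr_scal ((1 - q) * qint q (S m) * x / q) _ _ (a_sum q x (S m) Hq Hx)) as H2.
  pose proof (isr_plus _ _ _ _ H1 H2) as H3.
  assert (H4 : is_series (fun k => / q ^ (S k) * p_nk q (S m) (S k) x) (1 - p_nk q (S m) 0 x + (1 - q) * qint q (S m) * x / q * 1)).
  { eapply isr_ext; [| reflexivity | exact H3]. intro k. cbv beta. rewrite y_id by lra. reflexivity. }
  pose proof (isr_decr1 (fun k => / q ^ k * p_nk q (S m) k x) _ H4) as H5.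
  eapply isr_ext; [reflexivity | | exact H5]. simpl. field. lra.
Qed.

Lemma mom2 (q x : R) m : 0 < q < 1 -> 0 <= x ->
  is_series (fun k => / q ^ k * / q ^ k * p_nk q (S m) k x)
    (1 + (1 - q) * qint q (S m) * x / q + (1 - q) * qint q (S m) * x / (q * q) * (1 + (1 - q) * qint q (S (S m)) * x / q)).
Proof.
  intros Hq Hx.
  pose proof (isr_incr1 _ _ (mom1 q x m Hq Hx)) as H1.
  pose proof (isr_scal ((1 - q) * qint q (S m) * x / (q * q)) _ _ (mom1 q x (S m) Hq Hx)) as H2.
  pose proof (isr_plus _ _ _ _ H1 H2) as H3.
  assert (H4 : is_series (fun k => / q ^ (S k) * / q ^ (S k) * p_nk q (S m) (S k) x)
     (1 + (1 - q) * qint q (S m) * x / q - / q ^ 0 * p_nk q (S m) 0 x + (1 - q) * qint q (S m) * x / (q * q) * (1 + (1 - q) * qint q (S (S m)) * x / q))).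
  { eapply isr_ext; [| reflexivity | exact H3]. intro k. cbv beta. pose proof (y_id q x m k Hq Hx) as Y.
    assert (0 < q ^ k) by (apply pow_lt; lra). simpl pow. simpl pow in Y.
    transitivity (/ (q * q ^ k) * (/ (q * q ^ k) * p_nk q (S m) (S k) x)); [| ring]. rewrite Y. rewrite Rmult_plus_distr_l, Y. field. lra. }
  pose proof (isr_decr1 (fun k => / q ^ k * / q ^ k * p_nk q (S m) k x) _ H4) as H5.
  eapply isr_ext; [reflexivity | | exact H5]. simpl. field. lra.
Qed.



Definition Sd (f : R -> R) (d : R) := fun v => exists t x, 0 <= t /\ 0 <= x /\ Rabs (t - x) <= d /\ v = Rabs (f t - f x).

Lemma omega_lub (f : R -> R) (M : R) (HM : forall t, 0 <= t -> Rabs (f t) <= M) d : 0 <= d -> is_lub (Sd f d) (omega f d).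
Proof.
  intro Hd. unfold omega. apply epsilon_spec.
  assert (Hb : bound (Sd f d)).
  { exists (2 * M). intros v [t [x [Ht [Hx [_ ->]]]]].
    pose proof (HM t Ht). pose proof (HM x Hx).
    eapply Rle_trans. apply Rabs_triang. rewrite Rabs_Ropp. lra. }
  assert (He : exists v, Sd f d v).
  { exists (Rabs (f 0 - f 0)). exists 0, 0. repeat split; try lra. rewrite Rminus_0_r, Rabs_R0. exact Hd. }
  destruct (completeness _ Hb He) as [m Hm]. exists m. exact Hm.
Qed.

Lemma omega_ge (f : R -> R) (M : R) (HM : forall t, 0 <= t -> Rabs (f t) <= M) d t x : 0 <= t -> 0 <= x -> Rabs (t - x) <= d -> Rabs (f t - f x) <= omega f d.
Proof.
  intros Ht Hx Htx.
  assert (Hd : 0 <= d) by (pose proof (Rabs_pos (t - x)); lra).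
  destruct (omega_lub f M HM d Hd) as [Hub _]. apply Hub. exists t, x. repeat split; auto.
Qed.

Lemma omega_nonneg (f : R -> R) (M : R) (HM : forall t, 0 <= t -> Rabs (f t) <= M) d : 0 <= d -> 0 <= omega f d.
Proof.
  intro Hd. pose proof (omega_ge f M HM d 0 0 ltac:(lra) ltac:(lra) ltac:(rewrite Rminus_0_r, Rabs_R0; lra)).
  pose proof (Rabs_pos (f 0 - f 0)). lra.
Qed.

Lemma omega_chain (f : R -> R) (M : R) (HM : forall t, 0 <= t -> Rabs (f t) <= M) d : 0 < d -> forall m t x, 0 <= t -> 0 <= x -> Rabs (t - x) <= INR (S m) * d ->
  Rabs (f t - f x) <= INR (S m) * omega f d.
Proof.
  intros Hd m. induction m; intros t x Ht Hx Htx.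
  - simpl in *. rewrite Rmult_1_l in *. apply (omega_ge f M HM); auto.
  - pose proof (omega_nonneg f M HM d ltac:(lra)) as Hw.
    rewrite (S_INR (S m)) in Htx |- *.
    destruct (Rle_dec (Rabs (t - x)) d) as [Hle|Hgt].
    + pose proof (omega_ge f M HM d t x Ht Hx Hle). pose proof (pos_INR (S m)). nra.
    + apply Rnot_le_gt in Hgt.
      destruct (Rle_dec x t) as [Hxt|Hxt].
      * rewrite Rabs_pos_eq in Hgt, Htx by lra.
        assert (Hy : Rabs (f t - f (x + d)) <= INR (S m) * omega f d).
        { apply IHm; try lra. rewrite Rabs_pos_eq; lra. }
        assert (Hz : Rabs (f (x + d) - f x) <= omega f d).
        { apply (omega_ge f M HM); try lra. replace (x + d - x) with d by ring. rewrite Rabs_pos_eq; lra. }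
        replace (f t - f x) with ((f t - f (x + d)) + (f (x + d) - f x)) by ring.
        eapply Rle_trans. apply Rabs_triang. lra.
      * rewrite Rabs_left in Hgt, Htx by lra.
        assert (Hy : Rabs (f t - f (x - d)) <= INR (S m) * omega f d).
        { apply IHm; try lra. rewrite Rabs_left; lra. }
        assert (Hz : Rabs (f (x - d) - f x) <= omega f d).
        { apply (omega_ge f M HM); try lra. replace (x - d - x) with (- d) by ring. rewrite Rabs_Ropp, Rabs_pos_eq; lra. }
        replace (f t - f x) with ((f t - f (x - d)) + (f (x - d) - f x)) by ring.
        eapply Rle_trans. apply Rabs_triang. lra.
Qed.

Lemma omega_bound (f : R -> R) (M : R) (HM : forall t, 0 <= t -> Rabs (f t) <= M) d t x : 0 < d -> 0 <= t -> 0 <= x ->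
  Rabs (f t - f x) <= omega f d * (1 + (t - x) ^ 2 / d ^ 2).
Proof.
  intros Hd Ht Hx.
  pose proof (omega_nonneg f M HM d ltac:(lra)) as Hw.
  assert (Hsq : 0 <= (t - x) ^ 2 / d ^ 2).
  { apply Rmult_le_pos. apply pow2_ge_0. left. apply Rinv_0_lt_compat. apply pow_lt; lra. }
  destruct (Rle_dec (Rabs (t - x)) d) as [Hle|Hgt].
  - pose proof (omega_ge f M HM d t x Ht Hx Hle). nra.
  - apply Rnot_le_gt in Hgt.
    set (l := Rabs (t - x) / d).
    assert (Hl1 : 1 < l). { unfold l. apply (Rmult_lt_reg_r d); [lra|]. unfold Rdiv. rewrite Rmult_assoc, Rinv_l by lra. lra. }
    assert (Hl2 : (t - x) ^ 2 / d ^ 2 = l * l).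
    { unfold l. replace ((t - x) ^ 2) with (Rsqr (Rabs (t - x))) by (rewrite <- Rsqr_abs; unfold Rsqr; ring). unfold Rsqr. field. lra. }
    destruct (archimed l) as [A1 A2].
    assert (Hz : (0 <= up l)%Z). { apply le_IZR. lra. }
    assert (Hk : INR (Z.to_nat (up l)) = IZR (up l)). { rewrite INR_IZR_INZ, Z2Nat.id; auto. }
    destruct (Z.to_nat (up l)) as [|m] eqn:Em.
    + simpl in Hk. lra.
    + assert (Htx : Rabs (t - x) <= INR (S m) * d).
      { rewrite Hk. assert (Rabs (t - x) = l * d) by (unfold l; field; lra). nra. }
      pose proof (omega_chain f M HM d Hd m t x Ht Hx Htx).
      rewrite Hl2. assert (INR (S m) <= 1 + l * l) by nra. nra.
Qed.


Definition Xj (q : R) (j : nat) : R := q ^ (S j) / (1 - q).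
Definition wgt (q : R) (k j : nat) : R := q * (/ q ^ (k + 1) * (Rq q (S j) * (Xj q j) ^ k / qfact q k) * q ^ j).
Definition Kw (q : R) (k : nat) : R := (q / (1 - q)) ^ k / (q ^ k * qfact q k).

Lemma wgt_form (q : R) k j : 0 < q < 1 -> wgt q k j = Kw q k * ((q ^ j) ^ (S k) * Rq q (S j)).
Proof.
  intro Hq. unfold wgt, Kw, Xj.
  replace (q ^ S j / (1 - q)) with (q / (1 - q) * q ^ j) by (simpl; field; lra).
  rewrite Rpow_mult_distr. rewrite Nat.add_1_r. simpl pow.
  assert (0 < q ^ k) by (apply pow_lt; lra). assert (0 < qfact q k) by (apply qfact_pos; lra).
  field. lra.
Qed.

Lemma Kw_pos (q : R) k : 0 < q < 1 -> 0 < Kw q k.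
Proof.
  intro Hq. unfold Kw. assert (0 < q ^ k) by (apply pow_lt; lra). assert (0 < qfact q k) by (apply qfact_pos; lra).
  apply Rmult_lt_0_compat. apply pow_lt. apply Rmult_lt_0_compat; [lra| apply Rinv_0_lt_compat; lra].
  apply Rinv_0_lt_compat. nra.
Qed.

Lemma wgt_nonneg (q : R) k j : 0 < q < 1 -> 0 <= wgt q k j.
Proof.
  intro Hq. rewrite wgt_form by lra. apply Rmult_le_pos. left; apply Kw_pos; lra.
  apply Rmult_le_pos. apply pow_le, pow_le; lra. apply Rq_nonneg; lra.
Qed.

Lemma Kw_pq (q : R) k : 0 < q < 1 -> Kw q k * pq q k = 1.
Proof.
  intro Hq. unfold Kw. rewrite pq_qfact by lra.
  assert (0 < q ^ k) by (apply pow_lt; lra). assert (0 < qfact q k) by (apply qfact_pos; lra).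
  replace ((q / (1 - q)) ^ k / (q ^ k * qfact q k) * ((1 - q) ^ k * qfact q k)) with ((q / (1 - q) * (1 - q)) ^ k / q ^ k)
    by (rewrite Rpow_mult_distr; field; lra).
  replace (q / (1 - q) * (1 - q)) with q by (field; lra). field. lra.
Qed.

Lemma w_sum0 (q : R) k : 0 < q < 1 -> is_series (wgt q k) 1.
Proof.
  intro Hq. pose proof (isr_scal (Kw q k) _ _ (Gser q k Hq)) as H.
  eapply isr_ext; [| | exact H]. intro j. rewrite wgt_form by lra. reflexivity. apply Kw_pq; lra.
Qed.

Lemma w_sum1 (q : R) k : 0 < q < 1 ->
  is_series (fun j => wgt q k j * (Xj q j / q ^ k)) (q / (1 - q) * (/ q ^ k - q)).
Proof.
  intro Hq. pose proof (isr_scal (Kw q k * (q / (1 - q) / q ^ k)) _ _ (Gser q (S k) Hq)) as H.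
  assert (0 < q ^ k) by (apply pow_lt; lra).
  eapply isr_ext; [| | exact H].
  - intro j. rewrite wgt_form by lra. unfold Xj. simpl pow. field. lra.
  - simpl pq. replace (Kw q k * (q / (1 - q) / q ^ k) * (pq q k * (1 - q * q ^ k))) with
     ((Kw q k * pq q k) * (q / (1 - q) / q ^ k) * (1 - q * q ^ k)) by ring.
    rewrite Kw_pq by lra. field. lra.
Qed.

Lemma w_sum2 (q : R) k : 0 < q < 1 ->
  is_series (fun j => wgt q k j * (Xj q j / q ^ k) ^ 2) ((q / (1 - q)) ^ 2 * (/ q ^ k - q) * (/ q ^ k - q ^ 2)).
Proof.
  intro Hq. pose proof (isr_scal (Kw q k * (q / (1 - q) / q ^ k) ^ 2) _ _ (Gser q (S (S k)) Hq)) as H.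
  assert (0 < q ^ k) by (apply pow_lt; lra).
  eapply isr_ext; [| | exact H].
  - intro j. rewrite wgt_form by lra. unfold Xj. simpl pow. field. lra.
  - simpl pq. replace (Kw q k * (q / (1 - q) / q ^ k) ^ 2 * (pq q k * (1 - q * q ^ k) * (1 - q * (q * q ^ k)))) with
     ((Kw q k * pq q k) * (q / (1 - q) / q ^ k) ^ 2 * (1 - q * q ^ k) * (1 - q * (q * q ^ k))) by ring.
    rewrite Kw_pq by lra. field. lra.
Qed.

Definition uu (q N alpha beta : R) (k j : nat) : R := (Xj q j / q ^ k + alpha) / (N + beta).

Definition Vf (q N alpha beta x y : R) : R :=
  let c := q / (1 - q) in let e := alpha - x * (N + beta) in
  (c ^ 2 * (y - q) * (y - q ^ 2) + 2 * e * c * (y - q) + e ^ 2) / (N + beta) ^ 2.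

Lemma w_var (q N alpha beta x : R) k : 0 < q < 1 -> 0 < N + beta ->
  is_series (fun j => wgt q k j * (uu q N alpha beta k j - x) ^ 2) (Vf q N alpha beta x (/ q ^ k)).
Proof.
  intros Hq HB.
  set (e := alpha - x * (N + beta)).
  pose proof (isr_scal (/ (N + beta) ^ 2) _ _ (w_sum2 q k Hq)) as H2.
  pose proof (isr_scal (2 * e / (N + beta) ^ 2) _ _ (w_sum1 q k Hq)) as H1.
  pose proof (isr_scal (e ^ 2 / (N + beta) ^ 2) _ _ (w_sum0 q k Hq)) as H0.
  pose proof (isr_plus _ _ _ _ (isr_plus _ _ _ _ H2 H1) H0) as H.
  eapply isr_ext; [| | exact H].
  - intro j. unfold uu, e. field. split; [apply pow_nonzero|]; lra.
  - unfold Vf. fold e. field. split; [apply pow_nonzero|]; lra.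
Qed.


Lemma Dval (alpha beta q x : R) m : 0 < q < 1 -> 0 <= x -> 0 <= beta ->
  is_series (fun k => p_nk q (S m) k x * Vf q (qint q (S m)) alpha beta x (/ q ^ k)) (delta_n alpha beta q (S m) x).
Proof.
  intros Hq Hx Hb.
  set (N := qint q (S m)). set (B := N + beta). set (c := q / (1 - q)). set (e := alpha - x * B).
  assert (HN : 1 <= N) by (apply qint_ge1; lra).
  pose proof (isr_scal (c ^ 2 / B ^ 2) _ _ (mom2 q x m Hq Hx)) as H2.
  pose proof (isr_scal ((- c ^ 2 * (q + q ^ 2) + 2 * e * c) / B ^ 2) _ _ (mom1 q x m Hq Hx)) as H1.
  pose proof (isr_scal ((c ^ 2 * q ^ 3 - 2 * e * c * q + e ^ 2) / B ^ 2) _ _ (a_sum q x m Hq Hx)) as H0.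
  pose proof (isr_plus _ _ _ _ (isr_plus _ _ _ _ H2 H1) H0) as H.
  eapply isr_ext; [| | exact H].
  - intro k. unfold Vf. fold N B c e. cbv beta. field. split; [apply pow_nonzero|]; unfold B; lra.
  - unfold delta_n. fold N B. rewrite qint_S by lra. fold N. unfold e, c. fold B. unfold B. field.
    unfold B; repeat split; lra.
Qed.

Lemma main_fixed (alpha beta q : R) (m : nat) (f : R -> R) (M x : R) :
  0 <= alpha -> alpha <= beta -> 0 < q < 1 -> (forall t, 0 <= t -> Rabs (f t) <= M) -> 0 <= x ->
  Rabs (BSS alpha beta f q (S m) x - f x) <= 2 * omega f (sqrt (delta_n alpha beta q (S m) x)).
Proof.
  intros Ha Hab Hq HM Hx.
  set (N := qint q (S m)). set (A := q / (1 - q ^ S m)). set (B := N + beta).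
  assert (HN : 1 <= N) by (apply qint_ge1; lra).
  assert (HB : 0 < B) by (unfold B; lra).
  assert (Hqn : q ^ S m < 1) by (apply pow_lt_1_compat; [lra|lia]).
  assert (HNA : N * A = q / (1 - q)) by (unfold N, A, qint; field; lra).
  assert (HM0 : 0 <= M) by (pose proof (HM 0 ltac:(lra)); pose proof (Rabs_pos (f 0)); lra).
  set (u := uu q N alpha beta).
  assert (Hu : forall k j, 0 <= u k j).
  { intros k j. unfold u, uu, Xj. apply Rmult_le_pos; [|left; apply Rinv_0_lt_compat; lra].
    assert (0 < q ^ S j / (1 - q) / q ^ k).
    { unfold Rdiv. repeat apply Rmult_lt_0_compat; try apply Rinv_0_lt_compat; try apply pow_lt; lra. }
    lra. }
  set (I := fun k => Series (fun j => wgt q k j * f (u k j))).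
  assert (HI : forall k, is_series (fun j => wgt q k j * f (u k j)) (I k) /\ Rabs (I k) <= M).
  { intro k.
    assert (Hb : forall j, Rabs (wgt q k j * f (u k j)) <= M * wgt q k j).
    { intro j. rewrite Rabs_mult, Rabs_pos_eq by (apply wgt_nonneg; lra). rewrite (Rmult_comm M).
      apply Rmult_le_compat_l. apply wgt_nonneg; lra. apply HM, Hu. }
    pose proof (isr_scal M _ _ (w_sum0 q k Hq)) as Hs.
    destruct (isr_le _ _ _ Hb Hs) as [Hex Hle]. split.
    - apply Series_correct. exact Hex.
    - rewrite Rmult_1_r in Hle. exact Hle. }
  assert (Hjack : forall k, jackson q A (fun t => / q ^ (k + 1) * s_nk q (S m) k t *
       f ((qint q (S m) * t / q ^ k + alpha) / (qint q (S m) + beta))) = (1 - q) * A * (I k / q)).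
  { intro k. unfold jackson. f_equal. apply DS_eq.
    destruct (HI k) as [Hk _].
    eapply isr_ext; [| unfold Rdiv; apply Rmult_comm | exact (isr_scal (/ q) _ _ Hk)].
    intro j. cbv beta. fold N.
    assert (EX : N * (A * q ^ j) = Xj q j). { unfold Xj. rewrite <- Rmult_assoc, HNA. simpl. field. lra. }
    unfold s_nk. fold N. rewrite EX. unfold u, uu, wgt, Rq.
    replace (- Xj q j) with (- (q ^ S j / (1 - q))) by reflexivity. fold B.
    assert (0 < qfact q k) by (apply qfact_pos; lra).
    field. repeat split; first [apply pow_nonzero; lra | lra]. }
  set (p := fun k => p_nk q (S m) k x).
  assert (Hp : forall k, 0 <= p k) by (intro; apply a_nonneg; lra).
  assert (Hps : is_series p 1) by (apply a_sum; lra).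
  set (Sp := Series (fun k => p k * I k)).
  assert (HSp : is_series (fun k => p k * I k) Sp).
  { apply Series_correct.
    assert (Hb : forall k, Rabs (p k * I k) <= M * p k).
    { intro k. rewrite Rabs_mult, Rabs_pos_eq by auto. rewrite (Rmult_comm M).
      apply Rmult_le_compat_l; auto. apply HI. }
    destruct (isr_le _ _ _ Hb (isr_scal M _ _ Hps)) as [Hex _]. exact Hex. }
  assert (HBSS : BSS alpha beta f q (S m) x = Sp).
  { unfold BSS. fold N.
    rewrite (DS_eq _ ((1 - q) * A / q * Sp)).
    - replace (N * ((1 - q) * A / q * Sp)) with ((N * A) * (1 - q) / q * Sp) by (field; lra).
      rewrite HNA. field. lra.
    - eapply isr_ext; [| reflexivity | exact (isr_scal ((1 - q) * A / q) _ _ HSp)].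
      intro k. cbv beta. fold A. rewrite Hjack. unfold p. field. lra. }
  rewrite HBSS.
  set (D := delta_n alpha beta q (S m) x).
  set (V := fun k => Vf q N alpha beta x (/ q ^ k)).
  assert (HV : forall k, is_series (fun j => wgt q k j * (u k j - x) ^ 2) (V k)) by (intro k; apply w_var; lra).
  assert (HV0 : forall k, 0 <= V k).
  { intro k.
    assert (Hpos : forall j, 0 <= wgt q k j * (u k j - x) ^ 2) by (intro j; apply Rmult_le_pos; [apply wgt_nonneg; lra| apply pow2_ge_0]).
    eapply Rle_trans; [| apply (isr_ge0 _ _ Hpos (HV k))]. apply Hpos. }
  assert (HD : is_series (fun k => p k * V k) D) by (apply Dval; lra).
  assert (HDpos : 0 < D).
  { assert (H0 : p 0%nat * V 0%nat <= D).
    { apply (isr_ge0 (fun k => p k * V k)); [intro; apply Rmult_le_pos; auto | exact HD]. }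
    assert (Hp0 : 0 < p 0%nat).
    { unfold p. rewrite a_form. rewrite Nat.add_0_r. unfold qtri. simpl pow.
      assert (0 < qfact q m) by (apply qfact_pos; lra).
      assert (1 <= qpoch q x (S m)) by (apply qpoch_ge1; lra). simpl qfact.
      replace (qfact q m / (1 * qfact q m) * 1 * 1 / qpoch q x (S m)) with (/ qpoch q x (S m)) by (field; lra).
      apply Rinv_0_lt_compat; lra. }
    assert (HVp : 0 < V 0%nat).
    { unfold V, Vf. simpl pow. rewrite Rinv_1.
      replace (q / (1 - q) * (q / (1 - q) * 1) * (1 - q) * (1 - q * (q * 1))) with (q * q * (1 + q)) by (field; lra).
      replace (2 * (alpha - x * (N + beta)) * (q / (1 - q)) * (1 - q)) with (2 * (alpha - x * (N + beta)) * q) by (field; lra).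
      apply Rmult_lt_0_compat; [| apply Rinv_0_lt_compat; fold B; nra].
      set (e := alpha - x * (N + beta)). replace (q * q * (1 + q) + 2 * e * q + e * (e * 1)) with ((q + e) * (q + e) + q * q * q) by ring. assert (0 < q * q * q) by (repeat apply Rmult_lt_0_compat; lra). assert (0 <= (q + e) * (q + e)) by apply Rle_0_sqr. lra. }
    nra. }
  set (dl := sqrt D).
  assert (Hdl : 0 < dl) by (apply sqrt_lt_R0; lra).
  assert (Hdl2 : dl ^ 2 = D) by (apply pow2_sqrt; lra).
  set (w := omega f dl).
  assert (Hw : 0 <= w) by (apply (omega_nonneg f M HM); lra).
  assert (Hinner : forall k, Rabs (I k - f x) <= w * (1 + V k / dl ^ 2)).
  { intro k. destruct (HI k) as [HIk _].
    pose proof (isr_minus _ _ _ _ HIk (isr_scal (f x) _ _ (w_sum0 q k Hq))) as Hb.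
    pose proof (isr_scal w _ _ (isr_plus _ _ _ _ (w_sum0 q k Hq) (isr_scal (/ dl ^ 2) _ _ (HV k)))) as He.
    assert (Hle : forall j, Rabs (wgt q k j * f (u k j) - f x * wgt q k j) <=
       w * (wgt q k j + / dl ^ 2 * (wgt q k j * (u k j - x) ^ 2))).
    { intro j. replace (wgt q k j * f (u k j) - f x * wgt q k j) with (wgt q k j * (f (u k j) - f x)) by ring.
      rewrite Rabs_mult, Rabs_pos_eq by (apply wgt_nonneg; lra).
      pose proof (omega_bound f M HM dl (u k j) x Hdl (Hu k j) Hx) as Ho. fold w in Ho.
      assert (0 <= wgt q k j) by (apply wgt_nonneg; lra).
      replace (w * (wgt q k j + / dl ^ 2 * (wgt q k j * (u k j - x) ^ 2))) with (wgt q k j * (w * (1 + (u k j - x) ^ 2 / dl ^ 2))) by (field; lra).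
      apply Rmult_le_compat_l; auto. }
    destruct (isr_le _ _ _ Hle He) as [_ Hr].
    rewrite (is_series_unique _ _ Hb) in Hr.
    replace (w * (1 + / dl ^ 2 * V k)) with (w * (1 + V k / dl ^ 2)) in Hr by (field; lra).
    replace (I k - f x * 1) with (I k - f x) in Hr by ring. exact Hr. }
  pose proof (isr_minus _ _ _ _ HSp (isr_scal (f x) _ _ Hps)) as Hb.
  pose proof (isr_scal w _ _ (isr_plus _ _ _ _ Hps (isr_scal (/ dl ^ 2) _ _ HD))) as He.
  assert (Hle : forall k, Rabs (p k * I k - f x * p k) <= w * (p k + / dl ^ 2 * (p k * V k))).
  { intro k. replace (p k * I k - f x * p k) with (p k * (I k - f x)) by ring.
    rewrite Rabs_mult, Rabs_pos_eq by auto.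
    replace (w * (p k + / dl ^ 2 * (p k * V k))) with (p k * (w * (1 + V k / dl ^ 2))) by (field; lra).
    apply Rmult_le_compat_l; auto. }
  destruct (isr_le _ _ _ Hle He) as [_ Hr].
  rewrite (is_series_unique _ _ Hb) in Hr.
  replace (Sp - f x * 1) with (Sp - f x) in Hr by ring.
  replace (w * (1 + / dl ^ 2 * D)) with (2 * w) in Hr. exact Hr.
  rewrite Hdl2. field. lra.
Qed.


Theorem mainTheorem3 (alpha beta a : R) (q : nat -> R) :
  0 <= alpha -> alpha <= beta ->
  (forall n, (1 <= n)%nat -> 0 < q n < 1) ->
  st_lim q 1 ->
  st_lim (fun n => q n ^ n) a -> a < 1 ->
  st_lim (fun n => / qint (q n) n) 0 ->
  forall f : R -> R,
    (forall s t, 0 <= s -> s <= t -> f s <= f t) ->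
    (exists M, forall t, 0 <= t -> Rabs (f t) <= M) ->
    (forall x, 0 <= x -> forall eps, eps > 0 -> exists d, d > 0 /\
        forall y, 0 <= y -> Rabs (y - x) < d -> Rabs (f y - f x) < eps) ->
  forall x, 0 <= x -> forall n, (1 <= n)%nat ->
    Rabs (BSS alpha beta f (q n) n x - f x)
      <= 2 * omega f (sqrt (delta_n alpha beta (q n) n x)).
Proof.
  intros Ha Hab Hq _ _ _ _ f _ [M HM] _ x Hx n Hn.
  destruct n as [|m]; [lia|].
  apply (main_fixed alpha beta (q (S m)) m f M x Ha Hab (Hq _ Hn) HM Hx).
Qed.
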